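(* If $u\in\operatorname{Lip}([0,1])$, then for all $n\in\mathbb{N}$ the function $\operatorname{Avg}_1^{(n)}u$ is Lipschitz on $V_1^{(n)}$ with $[\operatorname{Avg}_1^{(n)}u]_{\operatorname{Lip}(V_1^{(n)})}\le[u]_{\operatorname{Lip}([0,1])}$.
   Context: $V_1^{(n)}=\{k/2^n:0\le k\le2^n\}$. For $\bar x\in V_1^{(n)}$, $U_1^{(n)}(\bar x)=[\bar x-2^{-n-1},\bar x+2^{-n-1})\cap[0,1]$ and $\operatorname{Avg}_1^{(n)}u(\bar x)=\frac1{|U_1^{(n)}(\bar x)|}\int_{U_1^{(n)}(\bar x)}u(z)\,dz$. $[f]_{\operatorname{Lip}(A)}=\sup_{x\ne y\in A}|f(x)-f(y)|/|x-y|$. *)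

(* Defs.v *)
From Stdlib Require Import Reals Lra.
From Coquelicot Require Import Coquelicot.
Open Scope R_scope.

Definition V1 (n : nat) (x : R) : Prop :=
  exists k : nat, (k <= 2 ^ n)%nat /\ x = INR k / 2 ^ n.

(* U_1^(n)(xbar) = [xbar - 2^(-n-1), xbar + 2^(-n-1)) ∩ [0,1];
   its endpoints (the half-open/closed distinction is irrelevant for the integral) *)
Definition U1_lo (n : nat) (xb : R) : R := Rmax 0 (xb - / 2 ^ (S n)).
Definition U1_hi (n : nat) (xb : R) : R := Rmin 1 (xb + / 2 ^ (S n)).

Definition Avg1 (n : nat) (u : R -> R) (xb : R) : R :=
  RInt u (U1_lo n xb) (U1_hi n xb) / (U1_hi n xb - U1_lo n xb).

Definition lipschitz_on (A : R -> Prop) (f : R -> R) : Prop :=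
  exists L : R, forall x y, A x -> A y -> Rabs (f x - f y) <= L * Rabs (x - y).

Definition lip_seminorm (A : R -> Prop) (f : R -> R) : Rbar :=
  Lub_Rbar (fun r => exists x y, A x /\ A y /\ x <> y /\
                                 r = Rabs (f x - f y) / Rabs (x - y)).

Definition I01 (x : R) : Prop := 0 <= x <= 1.

(* Main.v *)
Require Import Defs.
From Stdlib Require Import Reals Lra.
From Coquelicot Require Import Coquelicot.
Open Scope R_scope.

Lemma lip_cont (f : R -> R) (K : R) :
  (forall a b, Rabs (f a - f b) <= K * Rabs (a - b)) -> forall x, continuous f x.
Proof.
  intros H x. apply continuity_pt_filterlim.
  unfold continuity_pt, continue_in, limit1_in, limit_in.
  intros eps Heps. exists (eps / (Rabs K + 1)). split.
  { apply Rdiv_lt_0_compat; [lra| pose proof (Rabs_pos K); lra]. }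
  intros y [_ Hy]. simpl in *. unfold R_dist in *.
  pose proof (Rabs_pos K). pose proof (Rabs_pos (y - x)).
  eapply Rle_lt_trans. apply H.
  apply Rle_lt_trans with ((Rabs K + 1) * Rabs (y - x)).
  { apply Rmult_le_compat_r. lra. pose proof (Rle_abs K). lra. }
  apply Rmult_lt_reg_l with (/ (Rabs K + 1)). apply Rinv_0_lt_compat; lra.
  rewrite <- Rmult_assoc, Rinv_l by lra. unfold Rdiv in Hy. lra.
Qed.

Lemma avg_cv (w : R -> R) (K lo hi : R) :
  (forall a b, Rabs (w a - w b) <= K * Rabs (a - b)) -> lo <> hi ->
  RInt w lo hi / (hi - lo) = RInt (fun t => w ((hi - lo) * t + lo)) 0 1.
Proof.
  intros H Hne.
  assert (E := RInt_comp_lin w (hi - lo) lo 0 1).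
  replace ((hi - lo) * 0 + lo) with lo in E by ring.
  replace ((hi - lo) * 1 + lo) with hi in E by ring.
  rewrite <- E.
  2:{ apply ex_RInt_continuous. intros; eapply lip_cont; eauto. }
  rewrite RInt_scal. unfold scal; simpl; unfold mult; simpl. field. lra.
  apply ex_RInt_continuous. intros. apply (lip_cont _ (K * Rabs (hi - lo))).
  intros a b. replace ((hi - lo) * a + lo - ((hi - lo) * b + lo)) with ((hi-lo)*(a-b)) in * by ring.
  eapply Rle_trans. apply H. replace ((hi - lo) * a + lo - ((hi - lo) * b + lo)) with ((hi-lo)*(a-b)) by ring. rewrite Rabs_mult. lra.
Qed.

Lemma Rabs_inv' (x D : R) : Rabs x <= D -> -D <= x <= D.
Proof. unfold Rabs; destruct Rcase_abs; lra. Qed.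

Lemma lip1_Rmax (c h x y : R) : Rabs (Rmax c (x - h) - Rmax c (y - h)) <= Rabs (x - y).
Proof.
  apply Rabs_le. unfold Rabs, Rmax; destruct Rcase_abs; repeat destruct Rle_dec; lra.
Qed.
Lemma lip1_Rmin (c h x y : R) : Rabs (Rmin c (x + h) - Rmin c (y + h)) <= Rabs (x - y).
Proof.
  apply Rabs_le. unfold Rabs, Rmin; destruct Rcase_abs; repeat destruct Rle_dec; lra.
Qed.

Lemma main_bound (w : R -> R) (K D lo1 hi1 lo2 hi2 : R) :
  (forall a b, Rabs (w a - w b) <= K * Rabs (a - b)) -> 0 <= K ->
  Rabs (lo1 - lo2) <= D -> Rabs (hi1 - hi2) <= D ->
  Rabs (RInt (fun t => w ((hi1 - lo1) * t + lo1)) 0 1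
        - RInt (fun t => w ((hi2 - lo2) * t + lo2)) 0 1) <= K * D.
Proof.
  intros H HK H1 H2.
  assert (ex : forall lo hi, ex_RInt (fun t => w ((hi - lo) * t + lo)) 0 1).
  { intros lo hi. apply (ex_RInt_continuous (V:=R_CompleteNormedModule)). intros. apply (lip_cont _ (K * Rabs (hi - lo))).
    intros a b. eapply Rle_trans. apply H.
    replace ((hi - lo) * a + lo - ((hi - lo) * b + lo)) with ((hi-lo)*(a-b)) by ring.
    rewrite Rabs_mult. lra. }
  assert (E := RInt_minus _ _ 0 1 (ex lo1 hi1) (ex lo2 hi2)).
  match type of E with _ = ?r => assert (E2 : r = RInt (fun t => w ((hi1 - lo1) * t + lo1)) 0 1
        - RInt (fun t => w ((hi2 - lo2) * t + lo2)) 0 1) by reflexivity end.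
  rewrite <- E2, <- E. clear E E2.
  replace (K * D) with ((1 - 0) * (K * D)) by ring.
  apply abs_RInt_le_const. lra.
  { apply ex_RInt_minus; apply ex. }
  intros t Ht. unfold minus, plus, opp; simpl. eapply Rle_trans. apply H. apply Rmult_le_compat_l. lra.
  apply Rabs_inv' in H1. apply Rabs_inv' in H2.
  apply Rabs_le.
  replace ((hi1 - lo1) * t + lo1 - ((hi2 - lo2) * t + lo2)) with ((1 - t) * (lo1 - lo2) + t * (hi1 - hi2)) by ring.
  split; nra.
Qed.

Lemma V1_I01 (n : nat) (x : R) : V1 n x -> 0 <= x <= 1.
Proof.
  intros [k [Hk ->]].
  assert (Hp : 0 < 2 ^ n) by (apply pow_lt; lra).
  apply le_INR in Hk. rewrite pow_INR in Hk.
  replace (INR 2) with 2 in Hk by (simpl; ring).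
  pose proof (pos_INR k).
  split.
  - unfold Rdiv. apply Rmult_le_pos. lra. left; apply Rinv_0_lt_compat; lra.
  - apply Rmult_le_reg_r with (2 ^ n). lra. unfold Rdiv.
    rewrite Rmult_assoc, Rinv_l by lra. lra.
Qed.

Lemma lohi (n : nat) (x : R) : 0 <= x <= 1 ->
  0 <= U1_lo n x /\ U1_lo n x < U1_hi n x /\ U1_hi n x <= 1.
Proof.
  intros Hx. assert (Hh : 0 < / 2 ^ S n) by (apply Rinv_0_lt_compat, pow_lt; lra).
  unfold U1_lo, U1_hi, Rmax, Rmin. repeat destruct Rle_dec; lra.
Qed.

Theorem lemma4p12 (u : R -> R) (hu : lipschitz_on I01 u) (n : nat) :
  lipschitz_on (V1 n) (Avg1 n u) /\
  Rbar_le (lip_seminorm (V1 n) (Avg1 n u)) (lip_seminorm I01 u).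
Proof.
  destruct hu as [L HL].
  set (E := fun r => exists x y, I01 x /\ I01 y /\ x <> y /\
                                 r = Rabs (u x - u y) / Rabs (x - y)).
  assert (HE0 : E (Rabs (u 0 - u 1) / Rabs (0 - 1))).
  { exists 0, 1. unfold I01. repeat split; lra. }
  assert (Hr0 : 0 <= Rabs (u 0 - u 1) / Rabs (0 - 1)).
  { unfold Rdiv. apply Rmult_le_pos. apply Rabs_pos.
    left; apply Rinv_0_lt_compat. apply Rabs_pos_lt. lra. }
  assert (HubL : is_ub_Rbar E (Finite L)).
  { intros r [x [y [Hx [Hy [Hxy ->]]]]]. simpl.
    assert (0 < Rabs (x - y)) by (apply Rabs_pos_lt; lra).
    apply Rmult_le_reg_r with (Rabs (x - y)). lra. unfold Rdiv.
    rewrite Rmult_assoc, Rinv_l by lra. rewrite Rmult_1_r. apply HL; auto. }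
  destruct (Lub_Rbar_correct E) as [Hub Hlub].
  assert (HLE : Rbar_le (Lub_Rbar E) (Finite L)) by (apply Hlub; auto).
  assert (HGE := Hub _ HE0).
  unfold lip_seminorm. fold E.
  destruct (Lub_Rbar E) as [L0 | | ] eqn:HL0; simpl in HLE, HGE; try contradiction.
  assert (HK0 : 0 <= L0) by lra.
  assert (HuL0 : forall a b, I01 a -> I01 b -> Rabs (u a - u b) <= L0 * Rabs (a - b)).
  { intros a b Ha Hb. destruct (Req_dec a b) as [->|Hab].
    { rewrite !Rminus_diag, Rabs_R0. lra. }
    assert (Hr := Hub _ (ex_intro _ a (ex_intro _ b (conj Ha (conj Hb (conj Hab eq_refl)))))).
    simpl in Hr.
    assert (0 < Rabs (a - b)) by (apply Rabs_pos_lt; lra).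
    apply Rmult_le_reg_r with (/ Rabs (a - b)). apply Rinv_0_lt_compat; lra.
    rewrite Rmult_assoc, Rinv_r by lra. rewrite Rmult_1_r. exact Hr. }
  set (cl := fun x => Rmax 0 (Rmin 1 x)).
  assert (Hcl : forall x, I01 (cl x)).
  { intros x. unfold I01, cl, Rmax, Rmin. repeat destruct Rle_dec; lra. }
  assert (Hcl1 : forall x, I01 x -> cl x = x).
  { intros x Hx. unfold I01 in Hx; unfold cl, Rmax, Rmin. repeat destruct Rle_dec; lra. }
  assert (Hcll : forall a b, Rabs (cl a - cl b) <= Rabs (a - b)).
  { intros a b. apply Rabs_le. unfold Rabs, cl, Rmax, Rmin; destruct Rcase_abs;
    repeat destruct Rle_dec; lra. }
  set (w := fun x => u (cl x)).
  assert (Hw : forall a b, Rabs (w a - w b) <= L0 * Rabs (a - b)).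
  { intros a b. unfold w. eapply Rle_trans. apply HuL0; apply Hcl.
    apply Rmult_le_compat_l; auto. }
  assert (Havg : forall x, V1 n x -> Avg1 n u x =
     RInt (fun t => w ((U1_hi n x - U1_lo n x) * t + U1_lo n x)) 0 1).
  { intros x Hx. destruct (lohi n x (V1_I01 n x Hx)) as [H1 [H2 H3]].
    rewrite <- (avg_cv w L0); auto; [|lra].
    unfold Avg1. f_equal. apply RInt_ext.
    intros z Hz. rewrite Rmin_left, Rmax_right in Hz by lra.
    unfold w. rewrite Hcl1; auto. unfold I01; lra. }
  assert (Hmain : forall x y, V1 n x -> V1 n y ->
            Rabs (Avg1 n u x - Avg1 n u y) <= L0 * Rabs (x - y)).
  { intros x y Hx Hy. rewrite (Havg x Hx), (Havg y Hy).
    apply (main_bound w L0 (Rabs (x - y))); auto.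
    - apply lip1_Rmax.
    - apply lip1_Rmin. }
  split.
  - exists L0. exact Hmain.
  - destruct (Lub_Rbar_correct (fun r => exists x y, V1 n x /\ V1 n y /\ x <> y /\
                                 r = Rabs (Avg1 n u x - Avg1 n u y) / Rabs (x - y))) as [_ Hl].
    apply Hl. intros r [x [y [Hx [Hy [Hxy ->]]]]]. simpl.
    assert (0 < Rabs (x - y)) by (apply Rabs_pos_lt; lra).
    apply Rmult_le_reg_r with (Rabs (x - y)). lra. unfold Rdiv.
    rewrite Rmult_assoc, Rinv_l by lra. rewrite Rmult_1_r. apply Hmain; auto.
Qed.
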